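(* Let $G=(X,Y,E)$ be a bipartite graph with non-negative weights $\omega_e$ on its edges $e\in E$ and positive integer weights $s_x$ on its vertices $x\in X$ such that $\sum_{x\in X}s_x\ge|E|$. Suppose that for all $x\in X$ and all $y\in Y$, $$\sum_{e\in\delta_G(x)}\omega_e>\frac{s_x-1}{|Y|}\qquad\text{and}\qquad\sum_{e\in\delta_G(y)}\omega_e=\frac{1}{|Y|}.$$ Then every vertex $x\in X$ has degree exactly $s_x$ in $G$.
   Context: $\delta_G(z)$ denotes the set of edges of $G$ incident to the vertex $z$. *)

(* Defs.v *)
From HB Require Import structures.
From mathcomp Require Import all_boot all_order all_algebra.
Set Implicit Arguments. Unset Strict Implicit. Unset Printing Implicit Defensive.

(* A bipartite graph G = (X, Y, E) is given by two finite vertex classes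
   X, Y and an edge set E : {set X * Y}; the edge (x, y) joins x and y. *)

Definition deltaX (X Y : finType) (E : {set X * Y}) (x : X) : {set X * Y} :=
  [set e in E | e.1 == x].

Definition deltaY (X Y : finType) (E : {set X * Y}) (y : Y) : {set X * Y} :=
  [set e in E | e.2 == y].

(* Main.v *)
Require Import Defs.
From HB Require Import structures.
From mathcomp Require Import all_boot all_order all_algebra.
From mathcomp Require Import zify.
Import Order.TTheory GRing.Theory Num.Theory.
Local Open Scope ring_scope.

Theorem lemma2p8 (R : realFieldType) (X Y : finType) (E : {set X * Y})
    (w : X * Y -> R) (s : X -> nat)
    (hY : (0 < #|Y|)%N)
    (hw : forall e, e \in E -> 0 <= w e)
    (hs : forall x : X, (0 < s x)%N)
    (hsum : (#|E| <= \sum_(x : X) s x)%N)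
    (hX : forall x : X,
        ((s x)%:R - 1) / (#|Y|)%:R < \sum_(e in deltaX E x) w e)
    (hYc : forall y : Y, \sum_(e in deltaY E y) w e = 1 / (#|Y|)%:R) :
  forall x : X, #|deltaX E x| = s x.
Proof.
have Ypos : 0 < (#|Y|)%:R :> R by rewrite ltr0n.
have hwe : forall e, e \in E -> w e <= 1 / (#|Y|)%:R.
  move=> e eE; rewrite -(hYc e.2) (bigD1 e) /=; last by rewrite inE eE eqxx.
  rewrite lerDl; apply: sumr_ge0 => i; rewrite inE => /andP[] /andP[] iE _ _.
  exact: hw.
have hge : forall x, (s x <= #|deltaX E x|)%N.
  move=> x.
  have H1 : \sum_(e in deltaX E x) w e <= (1 / (#|Y|)%:R) *+ #|deltaX E x|.
    rewrite -sumr_const.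
    by apply: ler_sum => e; rewrite inE => /andP[eE _]; apply: hwe.
  have H2 := lt_le_trans (hX x) H1.
  move: H2; rewrite -[X in _ < X]mulr_natl.
  rewrite div1r ltr_pM2r ?invr_gt0 // ltrBlDr natr1 ltr_nat ltnS.
  by [].
have hcard : #|E| = (\sum_(x : X) #|deltaX E x|)%N.
  rewrite -sum1_card (partition_big (fun e : X * Y => e.1) predT) //=.
  apply: eq_bigr => x _; rewrite -sum1_card; apply: eq_bigl => e.
  by rewrite inE.
move=> x; apply/eqP; rewrite eq_sym eqn_leq hge /=; rewrite leqNgt; apply/negP => Hlt.
have : (\sum_(x : X) s x < \sum_(x : X) #|deltaX E x|)%N.
  rewrite (bigD1 x) //= [X in (_ < X)%N](bigD1 x) //=.
  rewrite -addSn; apply: leq_add Hlt _; apply: leq_sum => i _; exact: hge i.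
rewrite -hcard => H; move: hsum; by rewrite leqNgt H.
Qed.
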